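(* Let $\alpha\in\{l_1,r\}$ and let $\{\rho_{a|x}\}_{a\in\{0,1\},x\in\{1,2,3\}}$ be a qubit assemblage admitting an LHS model. Then $$S:=\sum_{a,b=0}^{1}\ \sum_{(i,j,k)}p(a|i)\,p(b|j)\,C^\alpha_k(\rho'_{a|i})\,C^\alpha_k(\rho'_{b|j})\;\le\;2\Omega_\alpha=4,$$ where the inner sum runs over all ordered triples $(i,j,k)$ of pairwise distinct elements of $\{1,2,3\}$.
   Context: $\sigma_1,\sigma_2,\sigma_3$ are the Pauli matrices; ''basis $k$'' is the eigenbasis $\{|e^k_0\rangle,|e^k_1\rangle\}$ of $\sigma_k$. Coherence measures: $C^{l_1}_k(\rho)=\sum_{m\ne n}|\langle e^k_m|\rho|e^k_n\rangle|$ and $C^r_k(\rho)=S(\Delta_k(\rho))-S(\rho)$, with $S$ the von Neumann entropy (base 2) and $\Delta_k$ the complete dephasing in basis $k$; $\Omega_{l_1}=\Omega_r=2$. A qubit assemblage is a family of positive semidefinite operators $\rho_{a|x}$ on $\mathbb C^2$ ($a\in\{0,1\}$ outcome, $x\in\{1,2,3\}$ setting) with $\operatorname{Tr}\sum_a\rho_{a|x}=1$ for each $x$; $p(a|x)=\operatorname{Tr}\rho_{a|x}$ and $\rho'_{a|x}=\rho_{a|x}/p(a|x)$ (terms with $p(a|x)=0$ contribute zero). The assemblage admits an LHS (local hidden state) model if there exist a finite set of hidden variables $\lambda$ with probabilities $P_\lambda$, conditional probabilities $p(a|x,\lambda)\ge0$ with $\sum_a p(a|x,\lambda)=1$, and qubit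 density matrices $\rho_\lambda$ such that $\rho_{a|x}=\sum_\lambda P_\lambda\,p(a|x,\lambda)\,\rho_\lambda$ for all $a,x$. *)

(* Defs.v *)
From Stdlib Require Import Reals Lra.
Open Scope R_scope.

Record Cx := mkC { re : R; im : R }.
Definition C0 : Cx := mkC 0 0.
Definition C1 : Cx := mkC 1 0.
Definition Cadd (z w : Cx) : Cx := mkC (re z + re w) (im z + im w).
Definition Cmul (z w : Cx) : Cx :=
  mkC (re z * re w - im z * im w) (re z * im w + im z * re w).
Definition Cconj (z : Cx) : Cx := mkC (re z) (- im z).
Definition Cscal (r : R) (z : Cx) : Cx := mkC (r * re z) (r * im z).
Definition Cabs (z : Cx) : R := sqrt (re z * re z + im z * im z).

Record Vec2 := mkV { v0 : Cx; v1 : Cx }.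
Record Mat2 := mkM { m00 : Cx; m01 : Cx; m10 : Cx; m11 : Cx }.

Definition ent (A : Mat2) (m n : bool) : Cx :=
  match m, n with
  | false, false => m00 A | false, true => m01 A
  | true, false => m10 A | true, true => m11 A end.
Definition vent (v : Vec2) (m : bool) : Cx := if m then v1 v else v0 v.

Definition Mzero : Mat2 := mkM C0 C0 C0 C0.
Definition Madd (A B : Mat2) : Mat2 :=
  mkM (Cadd (m00 A) (m00 B)) (Cadd (m01 A) (m01 B))
      (Cadd (m10 A) (m10 B)) (Cadd (m11 A) (m11 B)).
Definition Mscal (r : R) (A : Mat2) : Mat2 :=
  mkM (Cscal r (m00 A)) (Cscal r (m01 A)) (Cscal r (m10 A)) (Cscal r (m11 A)).
Definition Mmul (A B : Mat2) : Mat2 :=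
  mkM (Cadd (Cmul (m00 A) (m00 B)) (Cmul (m01 A) (m10 B)))
      (Cadd (Cmul (m00 A) (m01 B)) (Cmul (m01 A) (m11 B)))
      (Cadd (Cmul (m10 A) (m00 B)) (Cmul (m11 A) (m10 B)))
      (Cadd (Cmul (m10 A) (m01 B)) (Cmul (m11 A) (m11 B))).
Definition Mtr (A : Mat2) : Cx := Cadd (m00 A) (m11 A).
Definition Mdet (A : Mat2) : Cx :=
  Cadd (Cmul (m00 A) (m11 A)) (Cscal (-1) (Cmul (m01 A) (m10 A))).
Definition outer (u v : Vec2) : Mat2 :=
  mkM (Cmul (v0 u) (Cconj (v0 v))) (Cmul (v0 u) (Cconj (v1 v)))
      (Cmul (v1 u) (Cconj (v0 v))) (Cmul (v1 u) (Cconj (v1 v))).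
Definition braket (u : Vec2) (A : Mat2) (v : Vec2) : Cx :=
  Cadd (Cadd (Cmul (Cconj (v0 u)) (Cmul (m00 A) (v0 v)))
             (Cmul (Cconj (v0 u)) (Cmul (m01 A) (v1 v))))
       (Cadd (Cmul (Cconj (v1 u)) (Cmul (m10 A) (v0 v)))
             (Cmul (Cconj (v1 u)) (Cmul (m11 A) (v1 v)))).

Definition hermitian (A : Mat2) : Prop :=
  forall m n : bool, ent A m n = Cconj (ent A n m).
Definition psd (A : Mat2) : Prop :=
  hermitian A /\ forall v : Vec2, 0 <= re (braket v A v).
Definition density (A : Mat2) : Prop := psd A /\ Mtr A = C1.

Inductive setting := s1 | s2 | s3.

Definition Ci : Cx := mkC 0 1.
Definition Cmi : Cx := mkC 0 (-1).
Definition Cm1 : Cx := mkC (-1) 0.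
Definition sigma (k : setting) : Mat2 :=
  match k with
  | s1 => mkM C0 C1 C1 C0
  | s2 => mkM C0 Cmi Ci C0
  | s3 => mkM C1 C0 C0 Cm1 end.

Definition h : Cx := mkC (/ sqrt 2) 0.
Definition hi : Cx := mkC 0 (/ sqrt 2).
(* e^k_0 : eigenvector of sigma_k for eigenvalue +1, e^k_1 : for eigenvalue -1 *)
Definition ebasis (k : setting) (m : bool) : Vec2 :=
  match k, m with
  | s1, false => mkV h h
  | s1, true => mkV h (Cscal (-1) h)
  | s2, false => mkV h hi
  | s2, true => mkV h (Cscal (-1) hi)
  | s3, false => mkV C1 C0
  | s3, true => mkV C0 C1 end.

Definition log2 (x : R) : R := ln x / ln 2.
Definition eta (x : R) : R := if Rle_dec x 0 then 0 else x * log2 x.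
(* eigenvalues of a 2x2 Hermitian matrix: roots of lambda^2 - tr A lambda + det A *)
Definition eig_plus (A : Mat2) : R :=
  (re (Mtr A) + sqrt (re (Mtr A) * re (Mtr A) - 4 * re (Mdet A))) / 2.
Definition eig_minus (A : Mat2) : R :=
  (re (Mtr A) - sqrt (re (Mtr A) * re (Mtr A) - 4 * re (Mdet A))) / 2.
Definition vN (A : Mat2) : R := - (eta (eig_plus A) + eta (eig_minus A)).

Definition dephase (k : setting) (A : Mat2) : Mat2 :=
  Madd (Mmul (Mmul (outer (ebasis k false) (ebasis k false)) A)
             (outer (ebasis k false) (ebasis k false)))
       (Mmul (Mmul (outer (ebasis k true) (ebasis k true)) A)
             (outer (ebasis k true) (ebasis k true))).

Inductive cmeasure := l1 | rel.

Definition coh_l1 (k : setting) (A : Mat2) : R :=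
  Cabs (braket (ebasis k false) A (ebasis k true))
  + Cabs (braket (ebasis k true) A (ebasis k false)).
Definition coh_r (k : setting) (A : Mat2) : R := vN (dephase k A) - vN A.
Definition coh (alpha : cmeasure) (k : setting) (A : Mat2) : R :=
  match alpha with l1 => coh_l1 k A | rel => coh_r k A end.
Definition Omega (alpha : cmeasure) : R := 2.

(* outcome a in {0,1} encoded as bool (false = 0, true = 1) *)
Definition Assemblage := bool -> setting -> Mat2.

Definition is_assemblage (rho : Assemblage) : Prop :=
  (forall a x, psd (rho a x)) /\
  (forall x, Mtr (Madd (rho false x) (rho true x)) = C1).

Definition prob (rho : Assemblage) (a : bool) (x : setting) : R := re (Mtr (rho a x)).
(* normalised conditional state (zero matrix when p(a|x) = 0; such terms are
   multiplied by p(a|x) = 0 anyway) *)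
Definition cond_state (rho : Assemblage) (a : bool) (x : setting) : Mat2 :=
  if Req_EM_T (prob rho a x) 0 then Mzero else Mscal (/ prob rho a x) (rho a x).

Fixpoint Rsum (n : nat) (f : nat -> R) : R :=
  match n with O => 0 | S n' => Rsum n' f + f n' end.
Fixpoint Msum (n : nat) (f : nat -> Mat2) : Mat2 :=
  match n with O => Mzero | S n' => Madd (Msum n' f) (f n') end.

(* LHS model with finitely many hidden variables lambda in {0,...,n-1} *)
Definition has_LHS (rho : Assemblage) : Prop :=
  exists (n : nat) (P : nat -> R) (pl : nat -> bool -> setting -> R)
         (sig : nat -> Mat2),
    (forall l, (l < n)%nat -> 0 <= P l) /\
    Rsum n P = 1 /\
    (forall l a x, (l < n)%nat -> 0 <= pl l a x) /\
    (forall l x, (l < n)%nat -> pl l false x + pl l true x = 1) /\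
    (forall l, (l < n)%nat -> density (sig l)) /\
    (forall a x, rho a x = Msum n (fun l => Mscal (P l * pl l a x) (sig l))).

Definition sumb (f : bool -> R) : R := f false + f true.
Definition sum3 (f : setting -> R) : R := f s1 + f s2 + f s3.
Definition setting_eqb (x y : setting) : bool :=
  match x, y with s1, s1 | s2, s2 | s3, s3 => true | _, _ => false end.
Definition pw_distinct (i j k : setting) : bool :=
  negb (setting_eqb i j) && negb (setting_eqb j k) && negb (setting_eqb i k).

Definition S_quantity (alpha : cmeasure) (rho : Assemblage) : R :=
  sumb (fun a => sumb (fun b =>
    sum3 (fun i => sum3 (fun j => sum3 (fun k =>
      if pw_distinct i j k then
        prob rho a i * prob rho b j
        * coh alpha k (cond_state rho a i) * coh alpha k (cond_state rho b j)
      else 0))))).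

(* Main.v *)
Require Import Defs.
From Stdlib Require Import Reals Lra Lia.
From Coquelicot Require Import Coquelicot.
Require Import Defs.
Open Scope R_scope.


Lemma ln_le_xm1 y : 0 < y -> ln y <= y - 1.
Proof. intros H. pose proof (exp_ineq1_le (ln y)). rewrite exp_ln in H0; lra. Qed.

Lemma ln_le' x y : 0 < x -> x <= y -> ln x <= ln y.
Proof. intros H1 H2. destruct (Req_dec x y). subst; lra. left; apply ln_increasing; lra. Qed.

Lemma mono (f df : R -> R) a b : a <= b ->
  (forall x, a <= x <= b -> is_derive f x (df x)) ->
  (forall x, a <= x <= b -> 0 <= df x) -> f a <= f b.
Proof.
  intros Hab Hd Hs. destruct (Req_dec a b). subst; lra.
  destruct (MVT_cor3 f df a b) as [c [H1 [H2 H3]]]. lra.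
  intros x ? ?. apply is_derive_Reals. apply Hd; lra.
  rewrite H3. assert (0 <= df c) by (apply Hs; lra). nra.
Qed.

Definition Phi y := (1+y)*ln(1+y) + (1-y)*ln(1-y).
Definition Lf y := ln(1+y) - ln(1-y).

Lemma Phi_deriv y : -1 < y < 1 -> is_derive Phi y (Lf y).
Proof. intros H. unfold Phi, Lf. auto_derive. lra. replace (1 + - y) with (1 - y) by ring. field. lra. Qed.

Lemma Lf_nonneg y : 0 <= y < 1 -> 0 <= Lf y.
Proof. intros H. unfold Lf. assert (ln (1-y) <= ln (1+y)) by (apply ln_le'; lra). lra. Qed.

Lemma Phi_incr x y : 0 <= x <= y -> y < 1 -> Phi x <= Phi y.
Proof.
  intros H1 H2. apply (mono Phi Lf). lra.
  intros z Hz; apply Phi_deriv; lra.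
  intros z Hz; apply Lf_nonneg; lra.
Qed.

Lemma ln2_pos : 0 < ln 2.
Proof. pose proof ln_lt_2; lra. Qed.

Lemma Phi_le y : 0 <= y < 1 -> Phi y <= 2 * ln 2.
Proof.
  intros H. unfold Phi.
  assert (ln (1+y) <= ln 2) by (apply ln_le'; lra).
  assert (0 <= ln (1+y)) by (rewrite <- ln_1; apply ln_le'; lra).
  assert (ln (1-y) <= 0) by (rewrite <- ln_1; apply ln_le'; lra).
  nra.
Qed.

Definition pf y := y * (/(1+y) + /(1-y)) - Lf y.

Lemma pf_nonneg y : 0 <= y < 1 -> 0 <= pf y.
Proof.
  intros H. replace 0 with (pf 0) by (unfold pf, Lf; replace (1+0) with 1 by ring;
    replace (1-0) with 1 by ring; rewrite ln_1; field).
  apply (mono pf (fun y => y * (/((1-y)*(1-y)) - /((1+y)*(1+y))))). lra.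
  - intros z Hz. unfold pf, Lf. auto_derive. lra.
    replace (1 + - z) with (1 - z) by ring. field. lra.
  - intros z Hz. apply Rmult_le_pos. lra.
    assert (/((1+z)*(1+z)) <= /((1-z)*(1-z))). apply Rinv_le_contravar. nra. nra. lra.
Qed.

Definition qf y := Lf y / y.

Lemma qf_incr a b : 0 < a <= b -> b < 1 -> qf a <= qf b.
Proof.
  intros H1 H2. apply (mono qf (fun y => pf y / (y*y))). lra.
  - intros z Hz. unfold qf, pf, Lf. auto_derive. lra.
    replace (1 + - z) with (1 - z) by ring. field. lra.
  - intros z Hz. apply Rdiv_le_0_compat. apply pf_nonneg; lra. nra.
Qed.

Lemma N_nonneg c : 0 <= c < 1 -> 0 <= (1+c)*ln(1+c) - (1-c)*ln(1-c) - 2*c*ln 2.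
Proof.
  intros H. set (A := ln (1+c)). set (B := ln (1-c)).
  assert (Hz : ln ((1-c)/(1+c)) = B - A).
  { unfold Rdiv. rewrite ln_mult, ln_Rinv; try (apply Rinv_0_lt_compat); unfold A, B; lra. }
  assert (H1 : A - B >= 2*c/(1+c)).
  { pose proof (ln_le_xm1 ((1-c)/(1+c))). rewrite Hz in H0.
    assert (0 < (1-c)/(1+c)) by (apply Rdiv_lt_0_compat; lra).
    specialize (H0 H1). replace (2*c/(1+c)) with (1 - (1-c)/(1+c)) by (field; lra). lra. }
  assert (H2 : ln 2 - A <= (1-c)/(1+c)).
  { pose proof (ln_le_xm1 (2/(1+c))).
    assert (0 < 2/(1+c)) by (apply Rdiv_lt_0_compat; lra).
    specialize (H0 H2). unfold Rdiv in H0. rewrite ln_mult, ln_Rinv in H0 by (try apply Rinv_0_lt_compat; lra).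
    replace ((1-c)/(1+c)) with (2 * /(1+c) - 1) by (field; lra). unfold A. lra. }
  assert (H3 : 2*c/(1+c) * (1-c) <= (A - B)*(1-c)) by (apply Rmult_le_compat_r; lra).
  assert (H4 : (ln 2 - A)*(2*c) <= (1-c)/(1+c)*(2*c)) by (apply Rmult_le_compat_r; lra).
  assert (E : 2*c/(1+c)*(1-c) = (1-c)/(1+c)*(2*c)) by (field; lra).
  lra.
Qed.

Definition Mf c := (Phi c - 2 * ln 2 * (1 - sqrt (1 - c*c))) / sqrt (1 - c*c).

Lemma F2 c : 0 <= c < 1 -> 2 * ln 2 * (1 - sqrt (1 - c*c)) <= Phi c.
Proof.
  intros H.
  assert (Hs : 0 < sqrt (1 - c*c)) by (apply sqrt_lt_R0; nra).
  assert (M0 : Mf 0 <= Mf c).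
  { apply (mono Mf (fun c => ((Lf c - 2 * ln 2 * c / sqrt (1 - c*c)) * sqrt (1 - c*c)
        + c * (Phi c - 2 * ln 2 * (1 - sqrt (1 - c*c))) / sqrt (1 - c*c))
        / (sqrt (1 - c*c) * sqrt (1 - c*c)))). lra.
    - intros z Hz. assert (0 < sqrt (1 - z*z)) by (apply sqrt_lt_R0; nra).
      unfold Mf, Phi, Lf. auto_derive;
      replace (1 + - (z*z)) with (1 - z*z) by ring;
      replace (1 + - z) with (1 - z) by ring.
      repeat split; try lra; nra.
      field. lra.
    - intros z Hz. assert (0 < sqrt (1 - z*z)) by (apply sqrt_lt_R0; nra).
      set (s := sqrt (1 - z*z)) in *.
      assert (Hss : s * s = 1 - z*z) by (unfold s; apply sqrt_sqrt; nra).
      apply Rdiv_le_0_compat; [|nra].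
      replace ((Lf z - 2 * ln 2 * z / s) * s + z * (Phi z - 2 * ln 2 * (1 - s)) / s)
        with (((1+z)*ln(1+z) - (1-z)*ln(1-z) - 2*z*ln 2) / s).
      apply Rdiv_le_0_compat; [apply N_nonneg; lra | lra].
      unfold Lf, Phi. field_simplify; try lra. replace (s^2) with (1 - z*z) by (rewrite <- Hss; ring). field. lra. }
  assert (Mf 0 = 0).
  { unfold Mf, Phi. replace (1 - 0*0) with 1 by ring. rewrite sqrt_1.
    replace (1+0) with 1 by ring. replace (1-0) with 1 by ring. rewrite ln_1. field. }
  rewrite H0 in M0. unfold Mf in M0.
  apply Rmult_le_compat_r with (r := sqrt (1 - c*c)) in M0; [|lra].
  unfold Rdiv in M0. rewrite Rmult_assoc, Rinv_l in M0; lra.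
Qed.

Definition psi t y := Phi (sqrt (y*y + t*t)) - Phi y.

Lemma psi_mono t x y : 0 < t -> 0 <= x <= y -> y*y + t*t < 1 -> psi t x <= psi t y.
Proof.
  intros Ht Hxy Hy.
  apply (mono (psi t) (fun y => Lf (sqrt (y*y + t*t)) * (y / sqrt (y*y+t*t)) - Lf y)). lra.
  - intros z Hz. assert (0 < z*z + t*t) by nra.
    assert (0 < sqrt (z*z+t*t)) by (apply sqrt_lt_R0; lra).
    assert (sqrt (z*z+t*t) < 1).
    { rewrite <- sqrt_1. apply sqrt_lt_1; nra. }
    assert (z < 1) by nra.
    unfold psi, Phi, Lf. auto_derive.
    repeat split; try lra.
    replace (1 + - z) with (1 - z) by ring.
    replace (1 + - sqrt (z*z+t*t)) with (1 - sqrt (z*z+t*t)) by ring. field. repeat split; lra.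
  - intros z Hz. assert (0 < z*z + t*t) by nra.
    assert (0 < sqrt (z*z+t*t)) by (apply sqrt_lt_R0; lra).
    assert (sqrt (z*z+t*t) < 1).
    { rewrite <- sqrt_1. apply sqrt_lt_1; nra. }
    destruct (Req_dec z 0) as [E|E].
    + subst z. unfold Lf. replace (1+0) with 1 by ring. replace (1-0) with 1 by ring.
      rewrite ln_1. lra.
    + assert (z <= sqrt (z*z+t*t)).
      { rewrite <- (sqrt_square z) at 1 by lra. apply sqrt_le_1_alt. nra. }
      pose proof (qf_incr z (sqrt (z*z+t*t))). unfold qf in H3.
      assert (Lf z / z <= Lf (sqrt (z * z + t * t)) / sqrt (z * z + t * t)) by (apply H3; lra).
      replace (Lf (sqrt (z * z + t * t)) * (z / sqrt (z * z + t * t)) - Lf z)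
        with (z * (Lf (sqrt (z * z + t * t)) / sqrt (z * z + t * t) - Lf z / z)) by (field; lra).
      apply Rmult_le_pos; lra.
Qed.

Lemma CR_Phi x R t : 0 <= x <= R -> R < 1 -> 0 <= t -> x*x + t*t = R*R ->
  Phi R - Phi x <= 2 * ln 2 * t.
Proof.
  intros Hx HR Ht E.
  destruct (Req_dec t 0) as [T|T].
  { subst t. assert (R = x) by nra. subst; lra. }
  assert (Ht' : 0 < t) by lra.
  assert (HR' : R = sqrt (x*x + t*t)) by (rewrite E; rewrite sqrt_square; lra).
  assert (Key : forall eps, 0 < eps -> eps <= 1 - t*t - x*x ->
     Phi R - Phi x <= 2 * ln 2 * sqrt (t*t + eps)).
  { intros eps He1 He2.
    set (y := sqrt (1 - t*t - eps)).
    assert (Hyy : y * y = 1 - t*t - eps) by (unfold y; apply sqrt_sqrt; nra).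
    assert (Hy0 : 0 <= y) by (unfold y; apply sqrt_pos).
    assert (Hxy : x <= y).
    { unfold y. rewrite <- (sqrt_square x) by lra. apply sqrt_le_1_alt. nra. }
    pose proof (psi_mono t x y Ht' (conj (proj1 Hx) Hxy) ltac:(lra)) as P.
    unfold psi in P. rewrite <- HR' in P.
    assert (sqrt (y*y+t*t) < 1) by (rewrite <- sqrt_1; apply sqrt_lt_1; nra).
    assert (Phi (sqrt (y*y+t*t)) <= 2 * ln 2) by (apply Phi_le; split; [apply sqrt_pos|lra]).
    assert (y < 1) by nra.
    pose proof (F2 y (conj Hy0 H1)).
    replace (1 - y*y) with (t*t + eps) in H2 by lra. lra. }
  destruct (Rle_dec (Phi R - Phi x) (2 * ln 2 * t)) as [OK|NO]; [exact OK|].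
  exfalso. pose proof ln2_pos.
  set (K := (Phi R - Phi x) / (2 * ln 2)).
  assert (HK : t < K).
  { unfold K. apply Rmult_lt_reg_r with (r := 2 * ln 2). lra.
    unfold Rdiv. rewrite Rmult_assoc, Rinv_l; lra. }
  set (eps := Rmin (1 - t*t - x*x) ((K*K - t*t)/2)).
  assert (He : 0 < eps) by (unfold eps; apply Rmin_glb_lt; nra).
  assert (He2 : eps <= 1 - t*t - x*x) by apply Rmin_l.
  assert (He3 : eps <= (K*K - t*t)/2) by apply Rmin_r.
  pose proof (Key eps He He2).
  assert (sqrt (t*t+eps) < K).
  { rewrite <- (sqrt_square K) by lra. apply sqrt_lt_1; nra. }
  assert (Phi R - Phi x = 2 * ln 2 * K) by (unfold K; field; lra).
  nra.
Qed.


Definition Hb y := -(eta ((1+y)/2) + eta ((1-y)/2)).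

Lemma eta_pos z : 0 < z -> eta z = z * (ln z / ln 2).
Proof. intros H. unfold eta, log2. destruct (Rle_dec z 0); lra. Qed.

Lemma Hb_Phi y : 0 <= y < 1 -> Hb y = 1 - Phi y / (2 * ln 2).
Proof.
  intros H. pose proof ln2_pos. unfold Hb, Phi.
  rewrite !eta_pos by lra. unfold Rdiv.
  rewrite !ln_mult, !ln_Rinv by lra. field. lra.
Qed.

Lemma Hb_1 : Hb 1 = 0.
Proof.
  unfold Hb. replace ((1+1)/2) with 1 by field. replace ((1-1)/2) with 0 by field.
  unfold eta, log2. destruct (Rle_dec 1 0); try lra. destruct (Rle_dec 0 0); try lra.
  rewrite ln_1. field. pose proof ln2_pos; lra.
Qed.

Lemma CR x R t : 0 <= x <= R -> R <= 1 -> 0 <= t -> x*x + t*t = R*R ->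
  0 <= Hb x - Hb R <= t.
Proof.
  intros Hx HR Ht E. pose proof ln2_pos.
  destruct (Req_dec R 1) as [E1|E1].
  - subst R. rewrite Hb_1. destruct (Req_dec x 1) as [X|X].
    + subst x. rewrite Hb_1. lra.
    + assert (x < 1) by (destruct (Rle_lt_or_eq_dec x 1); lra).
      assert (Hx1 : 0 <= x < 1) by lra.
      rewrite Hb_Phi by lra. pose proof (Phi_le x Hx1).
      pose proof (F2 x Hx1).
      replace (1 - x*x) with (t*t) in H2 by lra. rewrite sqrt_square in H2 by lra.
      split.
      * apply Rmult_le_reg_r with (r := 2 * ln 2). lra.
        unfold Rdiv. field_simplify; lra.
      * apply Rmult_le_reg_r with (r := 2 * ln 2). lra.
        unfold Rdiv. field_simplify; lra.
  - assert (R < 1) by (destruct (Rle_lt_or_eq_dec R 1); lra).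
    rewrite !Hb_Phi by lra.
    pose proof (Phi_incr x R Hx ltac:(lra)).
    pose proof (CR_Phi x R t Hx ltac:(lra) Ht E).
    split.
    * apply Rmult_le_reg_r with (r := 2 * ln 2). lra.
      unfold Rdiv. field_simplify; lra.
    * apply Rmult_le_reg_r with (r := 2 * ln 2). lra.
      unfold Rdiv. field_simplify; lra.
Qed.


Definition form a b x y := mkM (mkC a 0) (mkC x y) (mkC x (-y)) (mkC b 0).
Lemma s2' : (/ sqrt 2) ^ 2 = / 2.
Proof. simpl. rewrite Rmult_1_r, <- Rinv_mult. rewrite sqrt_sqrt; lra. Qed.
Lemma s4' : (/ sqrt 2) ^ 4 = / 4.
Proof. replace 4%nat with (2*2)%nat by reflexivity. rewrite pow_mult, s2'. field. Qed.
Ltac ssimp := ring_simplify; rewrite ?s2', ?s4'; field.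
Ltac cmp := cbn [dephase Madd Mmul Mtr Mdet outer Cadd Cmul Cconj Cscal ebasis form h hi re im m00 m01 m10 m11 v0 v1 braket C1 C0 Mscal].

Lemma herm_form A : hermitian A ->
  A = form (re (m00 A)) (re (m11 A)) (re (m01 A)) (im (m01 A)).
Proof.
  intros H. pose proof (H false false) as H1. pose proof (H true true) as H2.
  pose proof (H true false) as H3. simpl in *.
  destruct A as [[a a'] [x y] [z w] [b b']]; unfold form, Cconj in *; simpl in *.
  injection H1; injection H2; injection H3; intros; subst.
  repeat f_equal; lra.
Qed.

Lemma psd_form a b x y : psd (form a b x y) -> 0 <= a /\ 0 <= b /\ x*x + y*y <= a*b.
Proof.
  intros [_ H].
  pose proof (H (mkV C1 C0)) as H1. pose proof (H (mkV C0 C1)) as H2.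
  pose proof (H (mkV (mkC (-x) (-y)) (mkC a 0))) as H3.
  pose proof (H (mkV (mkC b 0) (mkC (-x) y))) as H4.
  pose proof (H (mkV (mkC (-x) (-y)) C1)) as H5.
  unfold braket, form, C1, C0, Cmul, Cadd, Cconj in *; simpl in *.
  ring_simplify in H1. ring_simplify in H2.
  assert (E3 : 0 <= a * (a*b - (x*x+y*y))) by (ring_simplify; ring_simplify in H3; lra).
  assert (E4 : 0 <= b * (a*b - (x*x+y*y))) by (ring_simplify; ring_simplify in H4; lra).
  assert (E5 : 0 <= a * (x*x+y*y) + b - 2*(x*x+y*y)) by (ring_simplify; ring_simplify in H5; lra).
  split; [lra|split;[lra|]].
  destruct (Rle_lt_or_eq_dec 0 a H1) as [Ha|Ha].
  - apply Rmult_le_reg_l with a; nra.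
  - subst a. destruct (Rle_lt_or_eq_dec 0 b H2) as [Hb|Hb].
    + apply Rmult_le_reg_l with b; nra.
    + subst b. nra.
Qed.

Definition crd (j : setting) (A : Mat2) : R :=
  match j with s1 => 2 * re (m01 A) | s2 => -2 * im (m01 A) | s3 => re (m00 A) - re (m11 A) end.
Definition o1 k := match k with s1 => s2 | s2 => s1 | s3 => s1 end.
Definition o2 k := match k with s1 => s3 | s2 => s3 | s3 => s2 end.
Definition nk k A := sqrt (crd (o1 k) A * crd (o1 k) A + crd (o2 k) A * crd (o2 k) A).

Lemma cabs_q z N : 4 * (re z * re z + im z * im z) = N -> Cabs z = sqrt N / 2.
Proof.
  intros E. unfold Cabs. rewrite <- E. rewrite sqrt_mult by nra.
  replace 4 with (2*2) by ring. rewrite sqrt_square by lra. field.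
Qed.

Lemma coh_l1_form k a b x y : coh_l1 k (form a b x y) = nk k (form a b x y).
Proof.
  unfold coh_l1, nk.
  rewrite (cabs_q _ (crd (o1 k) (form a b x y) * crd (o1 k) (form a b x y) +
     crd (o2 k) (form a b x y) * crd (o2 k) (form a b x y))).
  rewrite (cabs_q _ (crd (o1 k) (form a b x y) * crd (o1 k) (form a b x y) +
     crd (o2 k) (form a b x y) * crd (o2 k) (form a b x y))).
  field.
  all: destruct k; unfold crd, o1, o2; cmp; ssimp.
Qed.

Lemma vN_gen A D : re (Mtr A) = 1 -> re (Mtr A) * re (Mtr A) - 4 * re (Mdet A) = D ->
  vN A = Hb (sqrt D).
Proof.
  intros H1 H2. unfold vN, Hb, eig_plus, eig_minus. rewrite H2, H1. reflexivity.
Qed.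

Definition Rn A := sqrt (crd s1 A * crd s1 A + crd s2 A * crd s2 A + crd s3 A * crd s3 A).

Lemma vN_form a b x y : a + b = 1 -> vN (form a b x y) = Hb (Rn (form a b x y)).
Proof.
  intros H. apply vN_gen.
  - unfold Mtr, form; simpl. lra.
  - unfold Mtr, Mdet, form, crd; simpl. replace b with (1 - a) by lra. ring.
Qed.

Lemma Meq A B : re (m00 A) = re (m00 B) -> im (m00 A) = im (m00 B) ->
  re (m01 A) = re (m01 B) -> im (m01 A) = im (m01 B) ->
  re (m10 A) = re (m10 B) -> im (m10 A) = im (m10 B) ->
  re (m11 A) = re (m11 B) -> im (m11 A) = im (m11 B) -> A = B.
Proof.
  destruct A as [[] [] [] []], B as [[] [] [] []]; simpl; intros; subst; reflexivity.
Qed.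

Definition dform k a b x y :=
  match k with
  | s1 => form ((a+b)/2) ((a+b)/2) x 0
  | s2 => form ((a+b)/2) ((a+b)/2) 0 y
  | s3 => form a b 0 0 end.

Lemma deph_form k a b x y : dephase k (form a b x y) = dform k a b x y.
Proof.
  destruct k; apply Meq; unfold dform; cmp; ssimp.
Qed.

Lemma vN_deph k a b x y : a + b = 1 ->
  vN (dephase k (form a b x y)) = Hb (Rabs (crd k (form a b x y))).
Proof.
  intros H. rewrite <- sqrt_Rsqr_abs. unfold Rsqr. rewrite deph_form. apply vN_gen.
  - destruct k; unfold Mtr, dform, form; simpl; lra.
  - replace b with (1 - a) by lra.
    destruct k; unfold Mtr, Mdet, dform, form, crd; simpl; field.
Qed.

Lemma coh_r_form k a b x y : a + b = 1 ->
  coh_r k (form a b x y) = Hb (Rabs (crd k (form a b x y))) - Hb (Rn (form a b x y)).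
Proof. intros H. unfold coh_r. rewrite vN_deph, vN_form; auto. Qed.

Lemma sum_split k A : crd s1 A * crd s1 A + crd s2 A * crd s2 A + crd s3 A * crd s3 A =
  crd k A * crd k A + (crd (o1 k) A * crd (o1 k) A + crd (o2 k) A * crd (o2 k) A).
Proof. destruct k; simpl; ring. Qed.

Lemma nk_nonneg k A : 0 <= nk k A.
Proof. apply sqrt_pos. Qed.

Lemma coh_bnd al k a b x y : a + b = 1 -> 0 <= a -> 0 <= b -> x*x + y*y <= a*b ->
  0 <= coh al k (form a b x y) <= nk k (form a b x y).
Proof.
  intros H1 H2 H3 H4. destruct al; simpl.
  - rewrite coh_l1_form. split; [apply nk_nonneg | lra].
  - rewrite coh_r_form by auto.
    set (A := form a b x y).
    set (c := crd k A). set (T := crd (o1 k) A * crd (o1 k) A + crd (o2 k) A * crd (o2 k) A).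
    assert (HT : 0 <= T) by (unfold T; nra).
    assert (HS : crd s1 A * crd s1 A + crd s2 A * crd s2 A + crd s3 A * crd s3 A = c*c + T)
      by (apply sum_split).
    assert (HS1 : crd s1 A * crd s1 A + crd s2 A * crd s2 A + crd s3 A * crd s3 A <= 1).
    { unfold A, form, crd; simpl.
      assert (E : (a-b)*(a-b) = 1 - 4*a*b) by (replace b with (1 - a) by lra; ring).
      lra. }
    apply (CR (Rabs c) (Rn A) (nk k A)).
    + split. apply Rabs_pos. unfold Rn. rewrite HS. rewrite <- sqrt_Rsqr_abs. unfold Rsqr.
      apply sqrt_le_1_alt. lra.
    + unfold Rn. rewrite <- sqrt_1. apply sqrt_le_1_alt. lra.
    + apply nk_nonneg.
    + unfold Rn, nk. fold T. rewrite !sqrt_sqrt by nra.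
      rewrite <- Rabs_mult, Rabs_pos_eq by nra. lra.
Qed.


Lemma Rsum_ext n f g : (forall l, (l < n)%nat -> f l = g l) -> Rsum n f = Rsum n g.
Proof. induction n; intros H; simpl; auto. rewrite IHn, H; auto; intros; apply H; lia. Qed.
Lemma Rsum_le n f g : (forall l, (l < n)%nat -> f l <= g l) -> Rsum n f <= Rsum n g.
Proof. induction n; intros H; simpl. lra. assert (Rsum n f <= Rsum n g) by (apply IHn; intros; apply H; lia).
  assert (f n <= g n) by (apply H; lia). lra. Qed.
Lemma Rsum_plus n f g : Rsum n (fun l => f l + g l) = Rsum n f + Rsum n g.
Proof. induction n; simpl. ring. rewrite IHn; ring. Qed.
Lemma Rsum_scal n c f : Rsum n (fun l => c * f l) = c * Rsum n f.
Proof. induction n; simpl. ring. rewrite IHn; ring. Qed.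
Lemma Rsum_nonneg n f : (forall l, (l < n)%nat -> 0 <= f l) -> 0 <= Rsum n f.
Proof. intros H. replace 0 with (Rsum n (fun _ => 0)). apply Rsum_le; auto.
  clear H; induction n; simpl; auto; rewrite IHn; ring. Qed.

Lemma crd_add j A B : crd j (Madd A B) = crd j A + crd j B.
Proof. destruct j; simpl; ring. Qed.
Lemma crd_scal j r A : crd j (Mscal r A) = r * crd j A.
Proof. destruct j; simpl; ring. Qed.
Lemma crd_zero j : crd j Mzero = 0.
Proof. destruct j; simpl; ring. Qed.

Lemma mink2 a b c d : sqrt ((a+c)*(a+c) + (b+d)*(b+d)) <= sqrt (a*a+b*b) + sqrt (c*c+d*d).
Proof.
  assert (H1 : 0 <= sqrt (a*a+b*b)) by apply sqrt_pos.
  assert (H2 : 0 <= sqrt (c*c+d*d)) by apply sqrt_pos.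
  rewrite <- (sqrt_square (sqrt (a*a+b*b) + sqrt (c*c+d*d))) by lra.
  apply sqrt_le_1_alt.
  assert (E : (sqrt (a*a+b*b) + sqrt (c*c+d*d)) * (sqrt (a*a+b*b) + sqrt (c*c+d*d)) =
     a*a+b*b + (c*c+d*d) + 2 * sqrt ((a*a+b*b)*(c*c+d*d))).
  { rewrite sqrt_mult by nra.
    assert (Hu : sqrt (a*a+b*b) * sqrt (a*a+b*b) = a*a+b*b) by (apply sqrt_sqrt; nra).
    assert (Hv : sqrt (c*c+d*d) * sqrt (c*c+d*d) = c*c+d*d) by (apply sqrt_sqrt; nra).
    nra. }
  rewrite E.
  assert (a*c + b*d <= sqrt ((a*a+b*b)*(c*c+d*d))).
  { destruct (Rle_dec (a*c+b*d) 0). pose proof (sqrt_pos ((a*a+b*b)*(c*c+d*d))); lra.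
    rewrite <- (sqrt_square (a*c+b*d)) by lra. apply sqrt_le_1_alt. pose proof (Rle_0_sqr (a*d-b*c)); unfold Rsqr in *; nra. }
  nra.
Qed.

Lemma nk_add k A B : nk k (Madd A B) <= nk k A + nk k B.
Proof. unfold nk. rewrite !crd_add. apply mink2. Qed.

Lemma nk_Msum k n f : nk k (Msum n f) <= Rsum n (fun l => nk k (f l)).
Proof.
  induction n; simpl.
  - unfold nk. rewrite !crd_zero. replace (0*0+0*0) with 0 by ring. rewrite sqrt_0. lra.
  - pose proof (nk_add k (Msum n f) (f n)). lra.
Qed.

Lemma nk_scal k r A : 0 <= r -> nk k (Mscal r A) = r * nk k A.
Proof.
  intros H. unfold nk. rewrite !crd_scal.
  replace (r * crd (o1 k) A * (r * crd (o1 k) A) + r * crd (o2 k) A * (r * crd (o2 k) A))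
    with ((r*r) * (crd (o1 k) A * crd (o1 k) A + crd (o2 k) A * crd (o2 k) A)) by ring.
  rewrite sqrt_mult by nra. rewrite sqrt_square; auto.
Qed.

Lemma Mscal_form r a b x y : Mscal r (form a b x y) = form (r*a) (r*b) (r*x) (r*y).
Proof. unfold Mscal, Cscal, form; simpl. repeat f_equal; ring. Qed.

Lemma P1_mat al k (M : Mat2) : psd M ->
  0 <= re (Mtr M) * coh al k (if Req_EM_T (re (Mtr M)) 0 then Mzero else Mscal (/ re (Mtr M)) M)
  <= nk k M.
Proof.
  intros Hp. pose proof (herm_form M (proj1 Hp)) as HF.
  rewrite HF in Hp. destruct (psd_form _ _ _ _ Hp) as [Ha [Hb HK]].
  rewrite HF. set (a := re (m00 M)) in *. set (b := re (m11 M)) in *.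
  set (x := re (m01 M)) in *. set (y := im (m01 M)) in *.
  assert (Htr : re (Mtr (form a b x y)) = a + b) by (unfold Mtr, form; simpl; ring).
  rewrite Htr. destruct (Req_EM_T (a+b) 0) as [E|E].
  - rewrite E, Rmult_0_l. split; [lra | apply nk_nonneg].
  - assert (Hp0 : 0 < a + b) by lra.
    rewrite Mscal_form.
    assert (Hinv : 0 < / (a+b)) by (apply Rinv_0_lt_compat; lra).
    destruct (coh_bnd al k (/(a+b)*a) (/(a+b)*b) (/(a+b)*x) (/(a+b)*y)) as [C1 C2].
    + field. lra.
    + nra.
    + nra.
    + replace (/ (a + b) * x * (/ (a + b) * x) + / (a + b) * y * (/ (a + b) * y))
        with ((/(a+b)) * (/(a+b)) * (x*x+y*y)) by ring.
      replace (/ (a + b) * a * (/ (a + b) * b)) with ((/(a+b)) * (/(a+b)) * (a*b)) by ring.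
      apply Rmult_le_compat_l; nra.
    + assert (NK : nk k (form (/(a+b)*a) (/(a+b)*b) (/(a+b)*x) (/(a+b)*y)) = /(a+b) * nk k (form a b x y))
        by (rewrite <- Mscal_form; apply nk_scal; lra).
      rewrite NK in C2.
      split. nra.
      apply Rmult_le_compat_l with (r := a+b) in C2; [|lra].
      rewrite <- Rmult_assoc, Rinv_r in C2 by (intro; lra). lra.
Qed.


Lemma dens_bound A : density A ->
  nk s1 A * nk s1 A + nk s2 A * nk s2 A + nk s3 A * nk s3 A <= 2.
Proof.
  intros [Hp Ht]. pose proof (herm_form A (proj1 Hp)) as HF.
  rewrite HF in Hp, Ht. destruct (psd_form _ _ _ _ Hp) as [Ha [Hb HK]].
  apply (f_equal re) in Ht. unfold Mtr, form, C1 in Ht; simpl in Ht.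
  rewrite HF. unfold nk.
  rewrite !sqrt_sqrt by nra.
  unfold form, crd, o1, o2; simpl.
  set (a := re (m00 A)) in *. set (b := re (m11 A)) in *.
  assert (E : (a-b)*(a-b) = 1 - 4*a*b) by (replace b with (1 - a) by lra; ring).
  lra.
Qed.

Lemma jensen n (P f : nat -> R) : (forall l, (l < n)%nat -> 0 <= P l) -> Rsum n P = 1 ->
  Rsum n (fun l => P l * f l) * Rsum n (fun l => P l * f l) <= Rsum n (fun l => P l * (f l * f l)).
Proof.
  intros HP H1. set (m := Rsum n (fun l => P l * f l)).
  assert (H : 0 <= Rsum n (fun l => P l * ((f l - m) * (f l - m)))).
  { apply Rsum_nonneg. intros l Hl. apply Rmult_le_pos. apply HP; exact Hl. exact (Rle_0_sqr _). }
  rewrite (Rsum_ext n _ (fun l => (P l * (f l * f l) + (-2*m) * (P l * f l)) + (m*m) * P l)) in H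
    by (intros; ring).
  rewrite !Rsum_plus, !Rsum_scal, H1 in H. fold m in H. lra.
Qed.

Lemma final_comb (V : bool -> setting -> setting -> R) (Y : setting -> R) :
  (forall a i k, 0 <= V a i k) -> (forall i k, V false i k + V true i k <= Y k) ->
  Y s1 * Y s1 + Y s2 * Y s2 + Y s3 * Y s3 <= 2 ->
  sumb (fun a => sumb (fun b => sum3 (fun i => sum3 (fun j => sum3 (fun k =>
    if pw_distinct i j k then V a i k * V b j k else 0))))) <= 4.
Proof.
  intros HV HU HY.
  assert (PB : forall i j k, (V false i k + V true i k) * (V false j k + V true j k) <= Y k * Y k).
  { intros. pose proof (HV false i k); pose proof (HV true i k);
    pose proof (HV false j k); pose proof (HV true j k).
    apply Rmult_le_compat; auto; lra. }
  pose proof (PB s2 s3 s1). pose proof (PB s1 s3 s2). pose proof (PB s1 s2 s3).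
  unfold sumb, sum3, pw_distinct; simpl.
  match goal with |- ?T <= _ =>
    replace T with (2 * ((V false s2 s1 + V true s2 s1) * (V false s3 s1 + V true s3 s1)
      + (V false s1 s2 + V true s1 s2) * (V false s3 s2 + V true s3 s2)
      + (V false s1 s3 + V true s1 s3) * (V false s2 s3 + V true s2 s3))) by ring end.
  lra.
Qed.

Lemma sumb_le f g : (forall a, f a <= g a) -> sumb f <= sumb g.
Proof. intros H. unfold sumb. pose proof (H false); pose proof (H true); lra. Qed.
Lemma sum3_le f g : (forall a, f a <= g a) -> sum3 f <= sum3 g.
Proof. intros H. unfold sum3. pose proof (H s1); pose proof (H s2); pose proof (H s3); lra. Qed.

Theorem proposition1 (alpha : cmeasure) (rho : Assemblage) :
  is_assemblage rho -> has_LHS rho ->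
  S_quantity alpha rho <= 2 * Omega alpha.
Proof.
  intros [Hpsd Htr] [n [P [pl [sig [HP [HPs [Hpl [Hpl1 [Hsig Hrho]]]]]]]]].
  set (V := fun a i k => nk k (rho a i)).
  set (Y := fun k => Rsum n (fun l => P l * nk k (sig l))).
  assert (P1 : forall a i k, 0 <= prob rho a i * coh alpha k (cond_state rho a i) <= V a i k).
  { intros. exact (P1_mat alpha k (rho a i) (Hpsd a i)). }
  apply Rle_trans with (sumb (fun a => sumb (fun b => sum3 (fun i => sum3 (fun j => sum3 (fun k =>
    if pw_distinct i j k then V a i k * V b j k else 0)))))).
  { unfold S_quantity. apply sumb_le; intro a; apply sumb_le; intro b; apply sum3_le; intro i;
    apply sum3_le; intro j; apply sum3_le; intro k.
    destruct (pw_distinct i j k); [|lra].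
    destruct (P1 a i k), (P1 b j k).
    replace (prob rho a i * prob rho b j * coh alpha k (cond_state rho a i) *
      coh alpha k (cond_state rho b j)) with
      ((prob rho a i * coh alpha k (cond_state rho a i)) *
       (prob rho b j * coh alpha k (cond_state rho b j))) by ring.
    apply Rmult_le_compat; auto. }
  unfold Omega. replace (2*2) with 4 by ring.
  apply (final_comb V Y).
  - intros; apply nk_nonneg.
  - intros i k. unfold V, Y.
    assert (Hb : forall a, nk k (rho a i) <= Rsum n (fun l => P l * pl l a i * nk k (sig l))).
    { intros a. rewrite Hrho. eapply Rle_trans; [apply nk_Msum|]. apply Rsum_le. intros l Hl.
      rewrite nk_scal. lra. apply Rmult_le_pos; auto. }
    pose proof (Hb false); pose proof (Hb true).
    assert (Rsum n (fun l => P l * pl l false i * nk k (sig l)) +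
            Rsum n (fun l => P l * pl l true i * nk k (sig l)) = Rsum n (fun l => P l * nk k (sig l))).
    { rewrite <- Rsum_plus. apply Rsum_ext. intros l Hl.
      replace (P l * pl l false i * nk k (sig l) + P l * pl l true i * nk k (sig l))
        with (P l * nk k (sig l) * (pl l false i + pl l true i)) by ring.
      rewrite Hpl1 by auto. ring. }
    lra.
  - unfold Y. pose proof (jensen n P (fun l => nk s1 (sig l)) HP HPs).
    pose proof (jensen n P (fun l => nk s2 (sig l)) HP HPs).
    pose proof (jensen n P (fun l => nk s3 (sig l)) HP HPs).
    assert (Rsum n (fun l => P l * (nk s1 (sig l) * nk s1 (sig l))) +
            Rsum n (fun l => P l * (nk s2 (sig l) * nk s2 (sig l))) +
            Rsum n (fun l => P l * (nk s3 (sig l) * nk s3 (sig l))) <= 2).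
    { rewrite <- !Rsum_plus. replace 2 with (2 * Rsum n P) by (rewrite HPs; ring).
      rewrite <- Rsum_scal. apply Rsum_le. intros l Hl.
      pose proof (dens_bound (sig l) (Hsig l Hl)). pose proof (HP l Hl). nra. }
    lra.
Qed.
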